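(* Let $N\ge1$, $1=a_0<a_1<\cdots<a_N$, $\mathbf a=(a_1,\dots,a_N)$. Then $$m(\mathbf{a})\le \frac{a_N}{\min_{0\le k<N}(a_{k+1}-a_k)}.$$
   Context: $m(\mathbf{a})=\min\{m\in\mathbb{N}: \sum_{k=0}^{N-1}(a_k/a_N)^m<1\}$, where $a_0=1$. *)

(* Defs.v *)
From Stdlib Require Import Reals.
Open Scope R_scope.

Fixpoint ratio_sum (a : nat -> R) (N : nat) (m : nat) (K : nat) : R :=
  match K with
  | O => 0
  | S k => ratio_sum a N m k + (a k / a N) ^ m
  end.

Definition m_cond (a : nat -> R) (N m : nat) : Prop :=
  ratio_sum a N m N < 1.

(* m is m(a) = min { m in N : sum_{k<N} (a_k/a_N)^m < 1 } *)
Definition is_m (a : nat -> R) (N m : nat) : Prop :=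
  m_cond a N m /\ forall m', m_cond a N m' -> (m <= m')%nat.

Fixpoint min_gap (a : nat -> R) (n : nat) : R :=
  match n with
  | O => a 1%nat - a 0%nat   (* unused for n = 0 *)
  | S O => a 1%nat - a 0%nat
  | S k => Rmin (min_gap a k) (a (S k) - a k)
  end.

(* Main.v *)
Require Import Defs.
From Stdlib Require Import Reals Lra Lia ZArith Classical.
Open Scope R_scope.

Lemma bern (h : R) (n : nat) : -1 <= h -> 1 + INR n * h <= (1 + h) ^ n.
Proof.
  intro Hh. induction n as [|n IH]; [simpl; lra|].
  rewrite S_INR. simpl.
  assert (0 <= INR n) by apply pos_INR.
  assert (0 <= INR n * (h*h)) by (apply Rmult_le_pos; nra).
  nra.
Qed.

Lemma floor_ex (t : R) : 0 <= t -> exists n : nat, INR n <= t < INR n + 1.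
Proof.
  intro Ht. destruct (base_Int_part t) as [H1 H2].
  assert (Hz : (0 <= Int_part t)%Z).
  { destruct (Z_lt_le_dec (Int_part t) 0) as [Hl|Hl]; [|exact Hl].
    exfalso. assert (IZR (Int_part t) <= IZR (-1)).
    { apply IZR_le. lia. } lra. }
  exists (Z.to_nat (Int_part t)).
  rewrite INR_IZR_INZ, Z2Nat.id by exact Hz. lra.
Qed.

Lemma least_ex (P : nat -> Prop) : forall k n, (n <= k)%nat -> P n ->
  exists m, P m /\ forall m', P m' -> (m <= m')%nat.
Proof.
  induction k as [|k IH]; intros n Hn Pn.
  - exists n. split; [exact Pn|]. intros; lia.
  - destruct (classic (exists m', P m' /\ (m' < n)%nat)) as [[m' [Pm' Hm']]|Hno].
    + apply (IH m'); [lia|exact Pm'].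
    + exists n. split; [exact Pn|]. intros m' Pm'.
      destruct (Nat.lt_ge_cases m' n); [|lia]. exfalso; apply Hno; eauto.
Qed.

Section S.
Variable (N : nat) (a : nat -> R).
Hypothesis incr : forall k, (k < N)%nat -> a k < a (S k).

Lemma mg_pos : forall n, (1 <= n)%nat -> (n <= N)%nat -> 0 < min_gap a n.
Proof.
  induction n as [|n IH]; intros H1 H2; [lia|].
  destruct n as [|n].
  - simpl. assert (a 0%nat < a 1%nat) by (apply incr; lia). lra.
  - change (min_gap a (S (S n))) with (Rmin (min_gap a (S n)) (a (S (S n)) - a (S n))).
    apply Rmin_glb_lt; [apply IH; lia|].
    assert (a (S n) < a (S (S n))) by (apply incr; lia). lra.
Qed.

Lemma mg_le : forall n k, (k < n)%nat -> (n <= N)%nat -> min_gap a n <= a (S k) - a k.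
Proof.
  induction n as [|n IH]; intros k H1 H2; [lia|].
  destruct n as [|n].
  - simpl. assert (k = 0%nat) by lia. subst. lra.
  - change (min_gap a (S (S n))) with (Rmin (min_gap a (S n)) (a (S (S n)) - a (S n))).
    destruct (Nat.eq_dec k (S n)) as [->|Hk].
    + apply Rmin_r.
    + eapply Rle_trans; [apply Rmin_l|]. apply IH; lia.
Qed.

Lemma chain : forall j k, (k + j <= N)%nat -> (1 <= N)%nat ->
  a k + INR j * min_gap a N <= a (k + j).
Proof.
  induction j as [|j IH]; intros k H H1.
  - simpl. rewrite Nat.add_0_r. lra.
  - rewrite Nat.add_succ_r, S_INR.
    assert (H3 := IH k ltac:(lia) H1).
    assert (H4 := mg_le N (k + j) ltac:(lia) ltac:(lia)). lra.
Qed.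
End S.

Theorem mainTheorem3 (N : nat) (a : nat -> R) :
  (1 <= N)%nat ->
  a 0%nat = 1 ->
  (forall k, (k < N)%nat -> a k < a (S k)) ->
  (exists m, is_m a N m) /\
  (forall m, is_m a N m -> INR m <= a N / min_gap a N).
Proof.
  intros HN H0 Hinc.
  set (d := min_gap a N). set (L := a N).
  assert (Hd : 0 < d) by (apply (mg_pos N a Hinc); lia).
  assert (HL : 1 + INR N * d <= L).
  { pose proof (chain N a N 0 ltac:(lia) HN) as H. simpl in H. rewrite H0 in H. exact H. }
  assert (HNr : 1 <= INR N) by (apply (le_INR 1); lia).
  assert (HLpos : 0 < L) by nra.
  set (x := d / L).
  assert (Hx0 : 0 < x) by (unfold x; apply Rdiv_lt_0_compat; lra).
  assert (Hx1 : x < 1).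
  { unfold x. apply (Rmult_lt_reg_r L); [lra|]. unfold Rdiv. rewrite Rmult_assoc, Rinv_l by lra. nra. }
  destruct (floor_ex (L / d)) as [n [Hn1 Hn2]].
  { apply Rlt_le, Rdiv_lt_0_compat; lra. }
  assert (Hxn : L / d = / x) by (unfold x; field; lra).
  rewrite Hxn in Hn1, Hn2.
  assert (Hn : (1 <= n)%nat).
  { destruct n; [|lia]. exfalso. simpl in Hn2.
    assert (1 < / x). { rewrite <- Rinv_1. apply Rinv_lt_contravar; lra. } lra. }
  assert (Hnr : 1 <= INR n) by (apply (le_INR 1); lia).
  set (y := (1 - x) ^ n).
  assert (Hy0 : 0 <= y) by (apply pow_le; lra).
  assert (Hy : y < 1/2).
  { assert (Hu : (1 - x) * (1 + / INR n) < 1).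
    { assert (x * (INR n + 1) > 1).
      { apply (Rmult_lt_compat_l x) in Hn2; [|lra]. rewrite Rinv_r in Hn2 by lra. lra. }
      assert (Hi : / INR n * INR n = 1) by (field; lra).
      assert (0 < / INR n) by (apply Rinv_0_lt_compat; lra).
      assert (/ INR n * 1 < / INR n * (x * (INR n + 1))) by (apply Rmult_lt_compat_l; lra).
      assert (/ INR n * (x * (INR n + 1)) = x * (1 + / INR n)) by (field; lra).
      nra. }
    assert (Hb := bern (/ INR n) n ltac:(assert (0 < / INR n) by (apply Rinv_0_lt_compat; lra); lra)).
    rewrite Rinv_r in Hb by lra.
    assert (Hp : 0 <= ((1 - x) * (1 + / INR n)) ^ n < 1).
    { apply pow_lt_1_compat; [split|lia].
      - apply Rmult_le_pos; [lra|]. assert (0 < / INR n) by (apply Rinv_0_lt_compat; lra); lra.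
      - exact Hu. }
    rewrite Rpow_mult_distr in Hp. fold y in Hp. nra. }
  assert (Hterm : forall k, (k < N)%nat -> (a k / L) ^ n <= y ^ (N - k)).
  { intros k Hk.
    assert (Hc := chain N a (N - k) k ltac:(lia) HN).
    replace (k + (N - k))%nat with N in Hc by lia. fold d L in Hc.
    assert (Ha1 : 1 <= a k).
    { pose proof (chain N a k 0 ltac:(lia) HN) as H. simpl in H. rewrite H0 in H.
      assert (0 <= INR k) by apply pos_INR. fold d in H. nra. }
    assert (Hq : a k / L <= 1 - INR (N - k) * x).
    { apply (Rmult_le_reg_r L); [lra|]. unfold x, Rdiv.
      replace (a k * / L * L) with (a k) by (field; lra).
      replace ((1 - INR (N - k) * (d * / L)) * L) with (L - INR (N - k) * d) by (field; lra).
      lra. }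
    assert (Hq0 : 0 <= a k / L) by (apply Rlt_le, Rdiv_lt_0_compat; lra).
    unfold y. rewrite <- pow_mult, Nat.mul_comm, pow_mult.
    apply pow_incr. split; [exact Hq0|].
    eapply Rle_trans; [exact Hq|]. replace (1 - INR (N-k) * x) with (1 + INR (N-k) * (-x)) by ring.
    replace (1 - x) with (1 + - x) by ring. apply bern. lra. }
  assert (Hsum : forall K, (K <= N)%nat -> ratio_sum a N n K * (1 - y) <= y ^ (S (N - K))).
  { induction K as [|K IH]; intros HK.
    - simpl. rewrite Rmult_0_l. apply Rmult_le_pos; [lra|]. apply pow_le; lra.
    - simpl ratio_sum. fold L.
      assert (H1 := IH ltac:(lia)). assert (H2 := Hterm K ltac:(lia)).
      replace (S (N - K)) with (S (S (N - S K))) in H1 by lia.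
      replace (N - K)%nat with (S (N - S K)) in H2 by lia.
      simpl in H1, H2 |- *.
      assert (0 <= y ^ (N - S K)) by (apply pow_le; lra).
      assert ((a K / L) ^ n * (1 - y) <= y * y ^ (N - S K) * (1 - y)) by (apply Rmult_le_compat_r; lra).
      nra. }
  assert (Hcond : m_cond a N n).
  { unfold m_cond. assert (H := Hsum N ltac:(lia)). rewrite Nat.sub_diag in H. simpl in H. nra. }
  split.
  - destruct (least_ex (m_cond a N) n n (le_n n) Hcond) as [m Hm]. exists m. exact Hm.
  - intros m [_ Hm]. assert (Hmn := Hm n Hcond). apply le_INR in Hmn.
    fold L d. rewrite Hxn. lra.
Qed.
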